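(* Let $p$ and $q$ be distinct positive integers. Then for every integer $n\ge p$, the number of compositions of $n-p$ all of whose parts are equal to $p$ or $q$ equals the number of compositions of $n$ all of whose parts are of the form $p+qi$ with $i\in\mathbb N=\{0,1,2,\dots\}$.
   Context: A composition of an integer $n\ge 0$ is a finite sequence $(a_1,\dots,a_k)$ of positive integers (the parts) with sum $n$; the empty sequence is the unique composition of $0$. *)

(* Defs.v *)
From mathcomp Require Import all_boot.
Set Implicit Arguments. Unset Strict Implicit. Unset Printing Implicit Defensive.

Definition is_composition (n : nat) (s : seq nat) : bool :=
  all (fun a => 0 < a) s && (sumn s == n).

Fixpoint seqs_bounded (l m : nat) : seq (seq nat) :=
  if l is l'.+1 then
    flatten [seq [seq a :: t | t <- seqs_bounded l' m] | a <- iota 0 m.+1]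
  else [:: [::]].

(* A finite universe containing every composition of n exactly once
   (every composition of n has length <= n and parts <= n). *)
Definition comp_universe (n : nat) : seq (seq nat) :=
  flatten [seq seqs_bounded l n | l <- iota 0 n.+1].

Definition num_compositions (P : pred nat) (n : nat) : nat :=
  count (fun s => is_composition n s && all P s) (comp_universe n).

(* Main.v *)
Require Import Defs.
From mathcomp Require Import all_boot zify.

Lemma uniq_flatten_map (S T : eqType) (s : seq S) (A : S -> seq T) :
  uniq s -> (forall x, uniq (A x)) ->
  (forall x y z, z \in A x -> z \in A y -> x = y) ->
  uniq (flatten (map A s)).
Proof.
move=> Us UA D; elim: s Us => //= x s IH /andP[xs Us].
rewrite cat_uniq UA IH // andbT; apply/hasP => -[z /flatten_mapP[y ys zy] zx].
by move: xs; rewrite (D _ _ _ zx zy) ys.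
Qed.

Lemma mem_seqs_bounded l m s :
  (s \in seqs_bounded l m) = (size s == l) && all (fun a => a <= m) s.
Proof.
elim: l s => [|l IH] [|a s] //.
- by apply/flatten_mapP => -[x _ /mapP[t _]].
- apply/idP/idP => [/flatten_mapP[x] | /andP[/eqP [sz] /andP[am al]]].
    rewrite mem_iota /= => xm /mapP[t]; rewrite IH => /andP[/eqP <- tm] [-> ->].
    by rewrite eqxx /=; apply/andP; split => //; lia.
  apply/flatten_mapP; exists a; first by rewrite mem_iota; lia.
  by apply/mapP; exists s => //; rewrite IH sz eqxx.
Qed.

Lemma uniq_seqs_bounded l m : uniq (seqs_bounded l m).
Proof.
elim: l => [|l IH] //; apply: uniq_flatten_map; first exact: iota_uniq.
  by move=> x; rewrite map_inj_uniq // => u v [].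
by move=> x y z /mapP[t _ ->] /mapP[u _ []].
Qed.

Lemma uniq_comp_universe n : uniq (comp_universe n).
Proof.
apply: uniq_flatten_map; first exact: iota_uniq.
  by move=> x; exact: uniq_seqs_bounded.
by move=> x y z; rewrite !mem_seqs_bounded => /andP[/eqP <- _] /andP[/eqP <- _].
Qed.

Lemma sumn_pos_size s : all (fun a => 0 < a) s -> size s <= sumn s.
Proof. elim: s => //= a s IH /andP[a0 /IH]; lia. Qed.

Lemma all_le_sumn s : all (fun a => a <= sumn s) s.
Proof.
elim: s => //= a s IH; apply/andP; split; first lia.
by apply: sub_all IH => x /=; lia.
Qed.

Lemma mem_comp_universe n s : is_composition n s -> s \in comp_universe n.
Proof.
case/andP => pos /eqP sn; apply/flatten_mapP; exists (size s).
  by rewrite mem_iota; have := @sumn_pos_size s pos; lia.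
by rewrite mem_seqs_bounded eqxx /= -sn all_le_sumn.
Qed.

Fixpoint comps (P : pred nat) (k n : nat) : seq (seq nat) :=
  match n with
  | 0 => [:: [::]]
  | _.+1 => if k is k'.+1 then
      flatten [seq [seq a :: t | t <- comps P k' (n - a)] | a <- [seq a <- iota 1 n | P a]]
      else [::]
  end.

Lemma mem_comps P k n s : n <= k ->
  (s \in comps P k n) = is_composition n s && all P s.
Proof.
elim: k n s => [|k IH] [|n] s hn //.
- case: s => [|[|a] t] //=; rewrite /is_composition /= addSn /=.
  by rewrite andbF in_cons.
- case: s => [|[|a] t] //=; rewrite /is_composition /= addSn /=.
  by rewrite andbF in_cons.
- case: s => [|a t].
    rewrite /is_composition [RHS]/=.
    by apply/negP => /flatten_mapP[x _ /mapP[u _]].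
  apply/idP/idP => [/flatten_mapP[x] | ].
    rewrite mem_filter mem_iota => /andP[Px xr] /mapP[u].
    rewrite IH; last lia.
    move=> /andP[/andP[pos /eqP su] Pu] [-> ->].
    rewrite /is_composition /= pos Pu Px /= !andbT; apply/andP; split; lia.
  rewrite {1}/is_composition => /andP[/andP[/andP[a0 pos] /eqP su] /andP[Pa Pt]].
  rewrite /= in su.
  apply/flatten_mapP; exists a.
    rewrite mem_filter mem_iota Pa /=; lia.
  apply/mapP; exists t => //; rewrite IH; last lia.
  apply/andP; split; last exact: Pt.
  apply/andP; split; [exact: pos | apply/eqP; lia].
Qed.

Lemma uniq_comps P k n : uniq (comps P k n).
Proof.
elim: k n => [|k IH] [|n] //.
apply: uniq_flatten_map; first exact/filter_uniq/iota_uniq.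
  by move=> x; rewrite map_inj_uniq // => u v [].
by move=> x y z /mapP[t _ ->] /mapP[u _ []].
Qed.

Lemma size_comps P k n : size (comps P k.+1 n.+1) =
  \sum_(a <- iota 1 n.+1 | P a) size (comps P k (n.+1 - a)).
Proof.
change (size (flatten [seq [seq a :: t | t <- comps P k (n.+1 - a)] | a <- [seq a <- iota 1 n.+1 | P a]]) = \sum_(a <- iota 1 n.+1 | P a) size (comps P k (n.+1 - a))).
rewrite size_flatten /shape -map_comp sumnE big_map big_filter.
by apply: eq_bigr => a _; rewrite /= size_map.
Qed.

Lemma num_comps P k n : n <= k -> num_compositions P n = size (comps P k n).
Proof.
move=> hn; rewrite /num_compositions -size_filter; apply: perm_size.
apply: uniq_perm; first exact/filter_uniq/uniq_comp_universe.
  exact: uniq_comps.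
move=> s; rewrite mem_filter mem_comps //.
by case H: (is_composition n s && all P s) => //=; apply: mem_comp_universe; case/andP: H.
Qed.

Lemma num_comps0 P : num_compositions P 0 = 1.
Proof. by rewrite (@num_comps P 0 0). Qed.

Lemma num_compsS P n : num_compositions P n.+1 =
  \sum_(a <- iota 1 n.+1 | P a) num_compositions P (n.+1 - a).
Proof.
rewrite (@num_comps P n.+1 n.+1) // size_comps big_seq_cond [RHS]big_seq_cond.
apply: eq_bigr => a /andP[]; rewrite mem_iota => ar _.
rewrite (@num_comps P n) //; lia.
Qed.

Lemma sum_eq_ind (r : seq nat) j (F : nat -> nat) : uniq r ->
  \sum_(i <- r) (i == j) * F i = (j \in r) * F j.
Proof.
elim: r => [|x r IH] /=; first by rewrite big_nil.
case/andP => xr ur; rewrite big_cons IH // inE.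
case: (eqVneq x j) => [<-|nxj].
  by rewrite (negbTE xr) mul0n addn0.
by [].
Qed.

Definition Tsum p q (G : nat -> nat) B n :=
  \sum_(i <- iota 0 B | p + q * i <= n) G (n - (p + q * i)).

Lemma Tsum_ext p q G B B' n : 0 < q -> n < B -> B <= B' ->
  Tsum p q G B' n = Tsum p q G B n.
Proof.
move=> hq nB BB; rewrite /Tsum -(subnKC BB) iotaD big_cat /=.
rewrite [X in _ + X]big_seq_cond [X in _ + X]big1 ?addn0 // => i /andP[].
rewrite mem_iota => ir hi; have := leq_pmull i hq; lia.
Qed.

Lemma Tsum_shift p q G B n : 0 < q ->
  Tsum p q G B.+1 n = (p <= n) * G (n - p) + (q <= n) * Tsum p q G B (n - q).
Proof.
move=> hq; rewrite /Tsum.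
have -> : iota 0 B.+1 = 0 :: map (addn 1) (iota 0 B) by rewrite -iotaDl.
rewrite big_cons big_map muln0 addn0.
have -> : \sum_(j <- iota 0 B | p + q * (1 + j) <= n) G (n - (p + q * (1 + j)))
   = (q <= n) * \sum_(i <- iota 0 B | p + q * i <= n - q) G (n - q - (p + q * i)).
  case: (leqP q n) => hqn.
    rewrite mul1n; apply: eq_big => i.
      by rewrite mulnDr muln1; move: (q * i) => x; apply/idP/idP; lia.
    by rewrite mulnDr muln1; move: (q * i) => x _; congr G; lia.
  rewrite mul0n big1 // => i; rewrite mulnDr muln1; lia.
by case: (leqP p n) => hpn; rewrite ?mul1n ?mul0n.
Qed.

Lemma f_rec p q m : 0 < p -> 0 < q -> p != q ->
  num_compositions (fun a => (a == p) || (a == q)) m.+1 =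
  (p <= m.+1) * num_compositions (fun a => (a == p) || (a == q)) (m.+1 - p) +
  (q <= m.+1) * num_compositions (fun a => (a == p) || (a == q)) (m.+1 - q).
Proof.
move=> hp hq hpq; set f := num_compositions _.
rewrite /f num_compsS -/f big_mkcond.
rewrite (eq_bigr (fun a => (a == p) * f (m.+1 - a) + (a == q) * f (m.+1 - a))); last first.
  move=> a _; case: (eqVneq a p) => [->|ap]; first by rewrite (negbTE hpq) /= mul1n mul0n addn0.
  by case: (eqVneq a q) => [->|aq] /=; rewrite ?mul1n ?mul0n.
rewrite big_split !sum_eq_ind ?iota_uniq // !mem_iota.
have -> : (1 <= p < 1 + m.+1) = (p <= m.+1) by lia.
by have -> : (1 <= q < 1 + m.+1) = (q <= m.+1) by lia.
Qed.

Lemma g_rec p q m : 0 < p -> 0 < q ->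
  num_compositions (fun a => (p <= a) && (q %| (a - p))) m.+1 =
  Tsum p q (num_compositions (fun a => (p <= a) && (q %| (a - p)))) m.+2 m.+1.
Proof.
move=> hp hq; set P2 := (fun a => _); set g := num_compositions P2.
rewrite /g num_compsS -/g /Tsum -big_filter -[RHS]big_filter.
rewrite -[RHS](big_map (fun i => p + q * i) xpredT (fun a => g (m.+1 - a))).
apply: perm_big; apply: uniq_perm.
- exact/filter_uniq/iota_uniq.
- rewrite map_inj_uniq; first exact/filter_uniq/iota_uniq.
  by move=> i j /eqP; rewrite eqn_add2l eqn_pmul2l // => /eqP.
move=> a; rewrite mem_filter mem_iota /P2; apply/idP/idP.
  case/andP => /andP[pa qa] ar; apply/mapP; exists ((a - p) %/ q).
    rewrite mem_filter mem_iota mulnC divnK //.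
    have := leq_div (a - p) q; rewrite /= in ar *; lia.
  by rewrite mulnC divnK //; lia.
case/mapP => i; rewrite mem_filter mem_iota => /andP[hi _] ->.
rewrite leq_addr addKn dvdn_mulr //=; lia.
Qed.

Lemma main_eq p q n : 0 < p -> 0 < q -> p != q -> p <= n ->
  num_compositions (fun a => (a == p) || (a == q)) (n - p) =
  num_compositions (fun a => (p <= a) && (q %| (a - p))) n.
Proof.
move=> hp hq hpq hpn.
set f := num_compositions (fun a => (a == p) || (a == q)).
set g := num_compositions (fun a => (p <= a) && (q %| (a - p))).
pose H n := Tsum p q g n.+1 n.
pose F n := (p <= n) * f (n - p).
have H0 : H 0 = 0.
  by rewrite /H /Tsum /= big_cons big_nil muln0 addn0 leqNgt hp.
have gH : forall n, g n = (n == 0) + H n.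
  case=> [|m]; first by rewrite H0 /g num_comps0.
  by rewrite /g g_rec.
have Hrec : forall n, H n = (p <= n) * g (n - p) + (q <= n) * H (n - q).
  case=> [|m]; first by rewrite H0 leqNgt hp leqNgt hq.
  rewrite /H Tsum_shift //; congr (_ + _).
  case: (leqP q m.+1) => hqm; rewrite ?mul0n ?mul1n //.
  apply: Tsum_ext => //; lia.
have f0 : f 0 = 1 by rewrite /f num_comps0.
have Frec : forall n, F n = (p <= n) * ((n - p == 0) + F (n - p)) + (q <= n) * F (n - q).
  move=> k; rewrite /F.
  case: (leqP p k) => hpk; last first.
    rewrite !mul0n add0n; case: (leqP q k) => hqk; rewrite ?mul0n //.
    by rewrite leqNgt (_ : k - q < p) //; lia.
  rewrite !mul1n.
  case E: (k - p) => [|m].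
    rewrite f0 leqNgt hp /= mul0n.
    case: (leqP q k) => hqk; rewrite ?mul0n //.
    by rewrite leqNgt (_ : k - q < p) //; lia.
  rewrite /f f_rec // -/f add0n -E.
  have -> : k - p - q = k - q - p by lia.
  case: (leqP q k) => hqk.
    have -> : (q <= k - p) = (p <= k - q) by lia.
    by rewrite mul1n.
  by have -> : (q <= k - p) = false by lia.
have HF : forall n, H n = F n.
  move=> k; elim: k {-2}k (leqnn k) => [|k IH] j hj.
    have -> : j = 0 by lia.
    by rewrite H0 /F leqNgt hp.
  rewrite Hrec Frec gH.
  case: (leqP p j) => hpj; case: (leqP q j) => hqj; rewrite ?mul0n ?mul1n ?add0n ?addn0;
    rewrite ?(IH (j - p)) ?(IH (j - q)) //; lia.
rewrite gH HF /F hpn mul1n.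
by have -> : (n == 0) = false by lia.
Qed.

Theorem proposition5 (p q : nat) (hp : 0 < p) (hq : 0 < q) (hpq : p != q)
  (n : nat) (hn : p <= n) :
  num_compositions (fun a => (a == p) || (a == q)) (n - p) =
  num_compositions (fun a => (p <= a) && (q %| (a - p))) n.
Proof. exact: main_eq. Qed.
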